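(* Let $k$ be a positive integer, $q\in\mathbb C\setminus\{0\}$, and let $\nu_1,\dots,\nu_k$ be commuting variables; work in the commutative algebra obtained from $\mathbb C[\nu_1,\dots,\nu_k]$ by inverting all differences $\nu_{r_1}-\nu_{r_2}$, $1\le r_1<r_2\le k$. Let $e_i:=e_i(\nu_1,\dots,\nu_k)$ for $0\le i\le k$ and $e_i:=0$ for $i>k$, and define $\mathfrak p'_1,\mathfrak p'_2,\dots$ recursively by $$\sum_{i=0}^{m-1}(-q)^ie_i\,\mathfrak p'_{m-i}=(-1)^{m-1}m_q\,e_m,\qquad m=1,2,\dots.$$ Then, with $\delta_j:=\prod_{r=1,\,r\ne j}^{k}\frac{\nu_j-q^{-2}\nu_r}{\nu_j-\nu_r}$, $$\mathfrak p'_i=q^{i-1}\sum_{j=1}^k\delta_j\,\nu_j^{\,i}\quad (i=1,2,\dots),\qquad\text{and}\qquad q^{-1}\sum_{j=1}^k\delta_j=q^{-k}k_q.$$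
   Context: $e_i(\nu_1,\dots,\nu_k)$ is the $i$-th elementary symmetric polynomial ($e_0=1$). For an integer $m\ge0$, $m_q:=q^{m-1}+q^{m-3}+\dots+q^{1-m}$. *)

(* Defs.v *)
From mathcomp Require Import all_boot all_order all_algebra.
Set Implicit Arguments. Unset Strict Implicit. Unset Printing Implicit Defensive.
Import Order.TTheory GRing.Theory Num.Theory.
Local Open Scope ring_scope.

(* i-th elementary symmetric polynomial evaluated at nu_1..nu_k;
   automatically 0 for i > k and 1 for i = 0. *)
Definition elsym (R : comNzRingType) (k : nat) (nu : 'I_k -> R) (i : nat) : R :=
  \sum_(I : {set 'I_k} | #|I| == i) \prod_(j in I) nu j.

Definition qint (R : comUnitRingType) (q : R) (m : nat) : R :=
  \sum_(i < m) q ^ ((m.-1)%:Z - (2 * i)%:Z).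

Definition delta (R : comUnitRingType) (q : R) (k : nat) (nu : 'I_k -> R)
  (j : 'I_k) : R :=
  \prod_(r < k | r != j) ((nu j - q ^- 2 * nu r) / (nu j - nu r)).

(* Main.v *)
Require Import Defs.
From mathcomp Require Import all_boot all_order all_algebra ring.
Import Order.TTheory GRing.Theory Num.Theory.
Set Implicit Arguments. Unset Strict Implicit. Unset Printing Implicit Defensive.
Local Open Scope ring_scope.

Section Esym.
Variables (R : comUnitRingType) (k : nat) (nu : 'I_k -> R).

Definition esym (S : {set 'I_k}) (m : nat) : R :=
  \sum_(I : {set 'I_k} | (I \subset S) && (#|I| == m)) \prod_(j in I) nu j.

Lemma elsymE m : elsym nu m = esym setT m.
Proof. by apply: eq_bigl => I; rewrite subsetT. Qed.

Lemma esym0 (S : {set 'I_k}) : esym S 0 = 1.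
Proof.
rewrite /esym (big_pred1 set0) ?big_set0 // => I /=.
rewrite cards_eq0; apply/idP/eqP => [/andP[_ /eqP]//| ->].
by rewrite sub0set eqxx.
Qed.

Lemma esym_big (S : {set 'I_k}) m : (#|S| < m)%N -> esym S m = 0.
Proof.
move=> Hm; rewrite /esym big_pred0 // => I; apply/negbTE/andP=> [[sIS /eqP cI]].
by move: (subset_leq_card sIS); rewrite cI leqNgt Hm.
Qed.

Lemma esymD1 (S : {set 'I_k}) j m : j \in S ->
  esym S m.+1 = esym (S :\ j) m.+1 + nu j * esym (S :\ j) m.
Proof.
move=> jS; rewrite /esym (bigID (fun I : {set 'I_k} => j \in I)) /= addrC; congr (_ + _).
  by apply: eq_bigl => I; rewrite subsetD1 andbAC.
rewrite mulr_sumr.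
rewrite (reindex_onto (fun J => j |: J) (fun I => I :\ j)) /=; last first.
  by move=> I /andP[_ jI]; rewrite setD1K.
apply: eq_big => J.
  rewrite setU11 andbT subUset sub1set jS /=.
  case jJ: (j \in J).
    have -> : (j |: J) :\ j == J = false.
      by apply/negbTE; apply: contraTneq jJ => <-; rewrite setD11.
    by rewrite andbF subsetD1 jJ andbF.
  by rewrite setU1K ?jJ // eqxx andbT cardsU1 jJ /= add1n eqSS subsetD1 jJ andbT.
move=> /andP[_ /eqP eJ].
have jJ : j \notin J by rewrite -eJ setD11.
by rewrite big_setU1 //=.
Qed.

Lemma esym_prod n (S : {set 'I_k}) (y c : R) : #|S| = n ->
  \prod_(r in S) (y + c * nu r) =
  \sum_(m < n.+1) c ^+ m * esym S m * y ^+ (n - m).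
Proof.
elim: n S => [|n IH] S cS.
  move/eqP: cS; rewrite cards_eq0 => /eqP ->.
  by rewrite big_set0 big_ord1 esym0 !mulr1.
have [j jS] : exists j, j \in S by apply/card_gt0P; rewrite cS.
have cSj : #|S :\ j| = n by move: (cardsD1 j S); rewrite jS cS add1n => -[].
rewrite (big_setD1 j jS) /= (IH (S :\ j)) //.
rewrite mulrDl; set s := (\sum_(m < n.+1) _).
rewrite [RHS]big_ord_recl /= esym0 mulr1 subn0 expr0 mul1r.
under [X in _ = _ + X]eq_bigr => i _ do
  rewrite /bump /= add1n subSS (esymD1 _ jS) mulrDr mulrDl.
rewrite big_split /= addrA; congr (_ + _); last first.
  rewrite /s mulr_sumr; apply: eq_bigr => i _; rewrite exprS; ring.
rewrite /s big_ord_recl [in RHS]big_ord_recr /= (@esym_big (S :\ j) n.+1) ?cSj // mulr0 mul0r addr0.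
rewrite mulrDr esym0 subn0 expr0 !mul1r -exprS; congr (_ + _).
rewrite mulr_sumr; apply: eq_bigr => i _ /=; rewrite /bump /= add1n.
rewrite -(subnSK (ltn_ord i)) [y ^+ (_).+1]exprS; ring.
Qed.

End Esym.

Lemma vander_zero (R : comUnitRingType) k (x : 'I_k -> R) (a : nat -> R) :
  (forall i j, i != j -> x i - x j \is a GRing.unit) ->
  (forall j, \sum_(i < k) a i * x j ^+ i = 0) -> forall i, (i < k)%N -> a i = 0.
Proof.
move=> Hx Hs i ik.
pose P := \poly_(i < k) a i.
have rP : all (root P) [seq x j | j <- enum 'I_k].
  by apply/allP => _ /mapP[j _ ->]; rewrite /root horner_poly Hs.
have uR : uniq_roots [seq x j | j <- enum 'I_k].
  have : uniq (enum 'I_k) := enum_uniq _.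
  elim: (enum 'I_k) => //= j l IH /andP[jl ul]; rewrite IH // andbT.
  apply/allP => _ /mapP[r rl ->]; rewrite /diff_roots mulrC eqxx /=; apply: Hx.
  by apply: contraNneq jl => <-.
have P0 : P = 0.
  apply/eqP; apply: contraTT (leqnn k) => nzP; rewrite -ltnNge.
  have := max_ring_poly_roots nzP rP uR.
  rewrite size_map size_enum_ord => /leq_trans; apply; exact: size_poly.
by have := coef_poly k a i; rewrite -/P P0 coef0 ik.
Qed.

Lemma vander_zero_rev (R : comUnitRingType) n (x : 'I_n.+1 -> R) (a : nat -> R) :
  (forall i j, i != j -> x i - x j \is a GRing.unit) ->
  (forall j, \sum_(m < n.+1) a m * x j ^+ (n - m) = 0) ->
  forall m, (m <= n)%N -> a m = 0.
Proof.
move=> Hx Hs m mn.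
have H := @vander_zero R n.+1 x (fun i => a (n - i)%N) Hx.
rewrite -(subKn mn); apply: H; last by rewrite ltnS leq_subr.
move=> j; rewrite -[RHS](Hs j) (reindex_inj rev_ord_inj) /=.
by apply: eq_bigr => i _; rewrite subSS subKn // -ltnS.
Qed.

Lemma tel (R : comUnitRingType) (A f g : nat -> R) (y : R) n :
 g 0%N = f 0%N -> (forall i, g i.+1 = f i.+1 - y * f i) ->
 \sum_(m < n.+1) A m * g m * y ^+ (n - m)
 = \sum_(m < n.+1) (A m - A m.+1) * f m * y ^+ (n - m) + A n.+1 * f n.
Proof.
move=> g0 gS.
elim: n => [|n IH]; first by rewrite !big_ord1 /= g0; ring.
rewrite big_ord_recr [in RHS]big_ord_recr /= !subnn !expr0.
under eq_bigr => i _ do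
  rewrite (subSn (ltn_ord i : (i <= n)%N)) [y ^+ _.+1]exprS mulrCA.
under [in RHS]eq_bigr => i _ do
  rewrite (subSn (ltn_ord i : (i <= n)%N)) [y ^+ _.+1]exprS mulrCA.
rewrite -!mulr_sumr IH.
set S := \sum_(i < n.+1) _.
rewrite gS.
ring.
Qed.
Section Main.
Variables (R : comUnitRingType) (n : nat) (q : R) (nu : 'I_n.+1 -> R).
Hypothesis Hq : q \is a GRing.unit.
Hypothesis Hu : forall r1 r2 : 'I_n.+1, r1 != r2 -> nu r1 - nu r2 \is a GRing.unit.

Local Notation t := ((q ^+ 2)^-1).
Local Notation f j m := (esym nu [set~ j] m).
Local Notation e m := (esym nu setT m).

Lemma cardC1 (j : 'I_n.+1) : #|[set~ j]| = n.
Proof. by rewrite cardsC1 card_ord. Qed.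

Lemma eD j m : e m.+1 = f j m.+1 + nu j * f j m.
Proof. by rewrite (esymD1 _ _ (in_setT j)) setTD. Qed.

Lemma e0f j : e 0 = f j 0.
Proof. by rewrite !esym0. Qed.

Lemma eD' j i : e i.+1 = f j i.+1 - (- nu j) * f j i.
Proof. by rewrite (eD j) mulNr opprK. Qed.

Lemma node (c : 'I_n.+1 -> R) j0 :
  \sum_j c j * \prod_(r in [set~ j]) (- nu j0 + nu r)
  = c j0 * \prod_(r in [set~ j0]) (nu r - nu j0).
Proof.
rewrite (bigD1 j0) //= [X in _ + X]big1 ?addr0.
  by congr (_ * _); apply: eq_bigr => r _; rewrite addrC.
move=> j jj0; rewrite (bigD1 j0) /= ?addNr ?mul0r ?mulr0 //.
by rewrite in_setC1 eq_sym.
Qed.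

Lemma deltaP j0 :
  delta q nu j0 * \prod_(r in [set~ j0]) (nu r - nu j0)
  = \prod_(r in [set~ j0]) (t * nu r - nu j0).
Proof.
rewrite /delta [X in X * _](eq_bigl (fun r => r \in [set~ j0])); last first.
  by move=> r; rewrite in_setC1.
rewrite -big_split; apply: eq_bigr => r; rewrite in_setC1 => rj.
rewrite -[nu r - nu j0]opprB -[LHS]/((nu j0 - t * nu r) / (nu j0 - nu r) * - (nu j0 - nu r)).
by rewrite mulrN divrK ?opprB // Hu // eq_sym.
Qed.

Lemma prodE j y :
  \prod_(r in [set~ j]) (y + nu r) = \sum_(m < n.+1) f j m * y ^+ (n - m).
Proof.
rewrite (_ : \prod_(r in [set~ j]) (y + nu r) = \prod_(r in [set~ j]) (y + 1 * nu r)); last first.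
  by apply: eq_bigr => r _; rewrite mul1r.
rewrite (esym_prod nu y 1 (cardC1 j)); apply: eq_bigr => i _; by rewrite expr1n mul1r.
Qed.

Lemma GL (c : 'I_n.+1 -> R) (L : nat -> R) :
  (forall j0, c j0 * \prod_(r in [set~ j0]) (nu r - nu j0)
     = \sum_(m < n.+1) L m * (- nu j0) ^+ (n - m)) ->
  forall m, (m <= n)%N -> \sum_j c j * f j m = L m.
Proof.
move=> H m mn; apply/eqP; rewrite -subr_eq0; apply/eqP.
apply: (@vander_zero_rev R n (fun j => - nu j)
          (fun m => \sum_j c j * f j m - L m)) => //.
  move=> i j ij; rewrite opprK addrC; apply: Hu; by rewrite eq_sym.
move=> j0; under eq_bigr do rewrite mulrBl; rewrite sumrB -H -(node c j0).
apply/eqP; rewrite subr_eq0; apply/eqP.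
under eq_bigr do rewrite mulr_suml; rewrite exchange_big /=.
apply: eq_bigr => j _.
rewrite prodE mulr_sumr.
by apply: eq_bigr => i _; rewrite mulrA.
Qed.


Lemma S1 m : (m <= n)%N ->
  \sum_j delta q nu j * f j m = (\sum_(m <= a < n.+1) t ^+ a) * e m.
Proof.
move=> mn.
rewrite (@GL (delta q nu) (fun m => (\sum_(m <= a < n.+1) t ^+ a) * e m) _ m mn) // => j0.
rewrite deltaP.
rewrite (_ : \prod_(r in [set~ j0]) (t * nu r - nu j0)
           = \prod_(r in [set~ j0]) (- nu j0 + t * nu r)); last first.
  by apply: eq_bigr => r _; rewrite addrC.
rewrite (esym_prod nu (- nu j0) t (cardC1 j0)).
have T := @tel R (fun m => \sum_(m <= a < n.+1) t ^+ a) (fun m => f j0 m)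
  (fun m => e m) (- nu j0) n (e0f j0) (eD' j0).
rewrite /= in T; rewrite /= T big_geq // mul0r addr0.
by apply: eq_bigr => i _; rewrite big_ltn ?addrK.
Qed.

Lemma S2 m :
  \sum_j (delta q nu j * nu j) * f j m = (\sum_(a < m.+1) t ^+ a) * e m.+1.
Proof.
case: (leqP m n) => mn; last first.
  rewrite (@esym_big _ _ nu setT m.+1) ?mulr0; last by rewrite cardsT card_ord ltnS.
  by apply: big1 => j _; rewrite esym_big ?mulr0 // cardC1.
rewrite (@GL (fun j => delta q nu j * nu j)
   (fun m => (\sum_(a < m.+1) t ^+ a) * e m.+1) _ m mn) // => j0.
rewrite -mulrA (mulrC (nu j0)) mulrA deltaP.
rewrite (_ : \prod_(r in [set~ j0]) (t * nu r - nu j0)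
           = \prod_(r in [set~ j0]) (- nu j0 + t * nu r)); last first.
  by apply: eq_bigr => r _; rewrite addrC.
rewrite (esym_prod nu (- nu j0) t (cardC1 j0)).
transitivity (\sum_(m < n.+2) (\sum_(a < m) t ^+ a) * e m * (- nu j0) ^+ (n.+1 - m)); last first.
  rewrite big_ord_recl big_ord0 !mul0r add0r.
  by apply: eq_bigr => i _; rewrite !lift0 subSS.
have T := @tel R (fun m => \sum_(a < m) t ^+ a) (fun m => f j0 m)
  (fun m => e m) (- nu j0) n.+1 (e0f j0) (eD' j0).
cbv beta in T; rewrite T.
rewrite (@esym_big _ _ nu [set~ j0] n.+1) ?cardC1 // mulr0 addr0.
rewrite [RHS]big_ord_recr /= (@esym_big _ _ nu [set~ j0] n.+1) ?cardC1 // mulr0 mul0r addr0.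
rewrite mulr_suml; apply: eq_bigr => i _.
rewrite big_ord_recr /= (subSn (ltn_ord i : (i <= n)%N)) [(- nu j0) ^+ _.+1]exprS.
set S := \sum_(a < i) _.
set T2 := t ^+ i.
ring.
Qed.

Lemma Tel2 j m :
  \sum_(i < m.+1) (-1) ^+ i * e i * nu j ^+ (m.+1 - i) = (-1) ^+ m * nu j * f j m.
Proof.
elim: m => [|m IH]; first by rewrite big_ord1 /= !esym0; ring.
rewrite big_ord_recr /= subSS subSnn.
under eq_bigr => i _ do
  rewrite (subSn (ltnW (ltn_ord i) : (i <= m.+1)%N)) [nu j ^+ _.+1]exprS mulrCA.
rewrite -mulr_sumr IH (eD j) !exprS; ring.
Qed.

Lemma Q1 m : q ^+ m * \sum_(a < m.+1) t ^+ a = qint q m.+1.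
Proof.
rewrite /qint mulr_sumr; apply: eq_bigr => a _ /=.
by rewrite exprzDr // -exprnP -exprnN exprVn -exprM.
Qed.

Lemma Q2 : q^-1 * \sum_(a < n.+1) t ^+ a = q ^- n.+1 * qint q n.+1.
Proof.
rewrite -Q1 mulrA; congr (_ * _).
by rewrite [q ^+ n.+1]exprSr (invrM (unitrX n Hq) Hq) divrK // unitrX.
Qed.

Lemma Rec m :
  \sum_(i < m.+1) (- q) ^+ i * e i *
     (q ^+ (m.+1 - i).-1 * \sum_j delta q nu j * nu j ^+ (m.+1 - i))
  = (-1) ^+ m * qint q m.+1 * e m.+1.
Proof.
transitivity (q ^+ m * \sum_j delta q nu j *
   \sum_(i < m.+1) (-1) ^+ i * e i * nu j ^+ (m.+1 - i)).
  under [in RHS]eq_bigr => j _ do rewrite mulr_sumr.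
  rewrite exchange_big mulr_sumr; apply: eq_bigr => i _.
  move: (esym nu setT i) => ei.
  rewrite !mulr_sumr; apply: eq_bigr => j _.
  have Hm : q ^+ m = q ^+ i * q ^+ (m - i)
    by rewrite -exprD subnKC // -ltnS.
  rewrite (subSn (ltn_ord i : (i <= m)%N)) /= [(- q) ^+ _]exprNn Hm; ring.
under eq_bigr => j _ do rewrite Tel2.
have -> : \sum_j delta q nu j * ((-1) ^+ m * nu j * f j m)
   = (-1) ^+ m * \sum_j (delta q nu j * nu j) * f j m.
  by rewrite mulr_sumr; apply: eq_bigr => j _; ring.
rewrite S2 -Q1.
set S := \sum_(a < m.+1) _.
ring.
Qed.

End Main.


Unset Implicit Arguments.
Set Strict Implicit.

Theorem lemma6p6 (R : comUnitRingType) (k : nat) (q : R) (nu : 'I_k -> R)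
  (p : nat -> R) :
  (0 < k)%N ->
  q \is a GRing.unit ->
  (forall r1 r2 : 'I_k, r1 != r2 -> nu r1 - nu r2 \is a GRing.unit) ->
  (forall m : nat, (0 < m)%N ->
     \sum_(i < m) (- q) ^+ i * elsym nu i * p (m - i)%N
       = (-1) ^+ m.-1 * qint q m * elsym nu m) ->
  (forall i : nat, (0 < i)%N ->
     p i = q ^+ i.-1 * \sum_(j < k) delta q nu j * nu j ^+ i)
  /\ q^-1 * \sum_(j < k) delta q nu j = q ^- k * qint q k.
Proof.
case: k nu => [|n] nu // _ Hq Hu Hrec.
split; last first.
  rewrite -(Q2 n Hq); congr (_ * _).
  have := S1 q Hu (leq0n n); rewrite esym0 mulr1 big_mkord => <-.
  by apply: eq_bigr => j _; rewrite esym0 mulr1.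
pose p' i := q ^+ i.-1 * \sum_(j < n.+1) delta q nu j * nu j ^+ i.
elim/ltn_ind => i IH; case: i IH => [//|m] IH _.
apply/eqP; rewrite -subr_eq0 -/(p' m.+1); apply/eqP.
have D : \sum_(i < m.+1) ((- q) ^+ i * esym nu setT i * p (m.+1 - i)%N
          - (- q) ^+ i * esym nu setT i * p' (m.+1 - i)%N) = p m.+1 - p' m.+1.
  rewrite big_ord_recl big1 ?addr0.
    by rewrite /= subn0 expr0 esym0 !mul1r.
  move=> i _; rewrite !lift0 subSS IH ?subrr //.
    by rewrite ltnS leq_subr.
  by rewrite subn_gt0.
rewrite -D sumrB.
have := Hrec m.+1 isT; under eq_bigr do rewrite elsymE; rewrite elsymE => ->.
by rewrite /p' (Rec Hq Hu m) subrr.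
Qed.
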